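(* Let $X$ be a geodesic $\delta$--hyperbolic space ($\delta\geqslant0$), $x_0\in X$, and let $u_1,u_2,v,w_1,w_2$ be isometries of $X$ with $u_1vw_1=u_2vw_2$ such that the products $u_1v$, $u_2v$, $vw_1$ and $vw_2$ are reduced at $x_0$. Assume $|vx_0-x_0|>26\delta$, $|u_1x_0-u_2x_0|\leqslant|vx_0-x_0|$ and $|u_1x_0-x_0|\leqslant|u_2x_0-x_0|$. Then $x_0$ and $vx_0$ are in $C_{u_1^{-1}u_2}^{+190\delta}$. Moreover, $(x_0,u_2x_0)_{u_1x_0}\leqslant 24\delta$, $(u_1x_0,u_1vx_0)_{u_2x_0}\leqslant 66\delta$ and $(u_2x_0,u_2vx_0)_{u_1vx_0}\leqslant 138\delta$.
   Context: Distance $|x-y|$; Gromov product $(p,q)_x:=\frac12(|p-x|+|q-x|-|p-q|)$; $X$ is $\delta$--hyperbolic if $(p,r)_x\geqslant\min\{(p,q)_x,(q,r)_x\}-\delta$ for all $p,q,r,x$. The product $uv$ of two isometries is reduced at $x_0$ if $(u^{-1}x_0,vx_0)_{x_0}\leqslant\delta$. For an isometry $g$, $[g]:=\inf_x|gx-x|$ and $C_g:=\{x\in X\mid|gx-x|\leqslant[g]+8\delta\}$; $A^{+a}:=\{x\mid d(x,A)\leqslant a\}$. *)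

(* Defs.v *)
From Stdlib Require Import Reals.
From Coquelicot Require Import Coquelicot.
Open Scope R_scope.

Record MetricSpace := {
  mcarrier :> Type;
  mdist : mcarrier -> mcarrier -> R;
  dist_refl : forall x, mdist x x = 0;
  dist_sym : forall x y, mdist x y = mdist y x;
  dist_pos : forall x y, 0 <= mdist x y;
  dist_sep : forall x y, mdist x y = 0 -> x = y;
  dist_tri : forall x y z, mdist x z <= mdist x y + mdist y z
}.

Arguments mdist {_} _ _.

Definition geodesic_space (X : MetricSpace) : Prop :=
  forall x y : X, exists gam : R -> X,
    gam 0 = x /\ gam (mdist x y) = y /\
    forall s t, 0 <= s <= mdist x y -> 0 <= t <= mdist x y ->
      mdist (gam s) (gam t) = Rabs (s - t).

Definition gromov {X : MetricSpace} (p q x : X) : R :=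
  (mdist p x + mdist q x - mdist p q) / 2.

Definition hyperbolic (X : MetricSpace) (delta : R) : Prop :=
  forall p q r x : X,
    gromov p r x >= Rmin (gromov p q x) (gromov q r x) - delta.

Record isometry (X : MetricSpace) := {
  iso_fun :> X -> X;
  iso_inv : X -> X;
  iso_inv_l : forall x, iso_inv (iso_fun x) = x;
  iso_inv_r : forall x, iso_fun (iso_inv x) = x;
  iso_dist : forall x y, mdist (iso_fun x) (iso_fun y) = mdist x y
}.

Arguments iso_inv {_} _ _.

Definition reduced {X : MetricSpace} (delta : R) (x0 : X) (u v : isometry X) : Prop :=
  gromov (iso_inv u x0) (v x0) x0 <= delta.

Definition transl_len {X : MetricSpace} (g : X -> X) : Rbar :=
  Glb_Rbar (fun r => exists x : X, r = mdist (g x) x).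

Definition C_set {X : MetricSpace} (delta : R) (g : X -> X) (x : X) : Prop :=
  Rbar_le (Finite (mdist (g x) x)) (Rbar_plus (transl_len g) (Finite (8 * delta))).

Definition dist_set {X : MetricSpace} (x : X) (A : X -> Prop) : Rbar :=
  Glb_Rbar (fun r => exists y : X, A y /\ r = mdist x y).

(* A^{+a} := { x | d(x, A) <= a } *)
Definition nbhd {X : MetricSpace} (A : X -> Prop) (a : R) (x : X) : Prop :=
  Rbar_le (dist_set x A) (Finite a).

(* Main.v *)
From Pilot Require Import Defs.
From Stdlib Require Import Reals Lra ZArith.
From Coquelicot Require Import Coquelicot.
Open Scope R_scope.

Definition mrefl := Pilot.Defs.dist_refl.
Definition msym := Pilot.Defs.dist_sym.
Definition mtri := Pilot.Defs.dist_tri.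
Definition mpos := Pilot.Defs.dist_pos.

Lemma ex_nat_gt (r : R) : exists n : nat, r < INR n.
Proof.
  destruct (Rlt_or_le r 0) as [H|H].
  - exists 0%nat. simpl. lra.
  - destruct (archimed r) as [H1 H2].
    assert (Hz : (0 <= up r)%Z).
    { apply le_IZR. lra. }
    exists (Z.to_nat (up r)). rewrite INR_IZR_INZ, Z2Nat.id; [lra|exact Hz].
Qed.

Lemma hypD (X : MetricSpace) (delta : R) : hyperbolic X delta ->
  forall p q r x : X, gromov p q x <= gromov p r x + delta \/
                      gromov q r x <= gromov p r x + delta.
Proof.
  intros H p q r x. specialize (H p q r x). unfold Rmin in H.
  destruct (Rle_dec (gromov p q x) (gromov q r x)); [left|right]; lra.
Qed.

Lemma inv_dist_l (X : MetricSpace) (f : isometry X) a b :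
  mdist (iso_inv f a) b = mdist a (f b).
Proof. rewrite <- (iso_dist X f), iso_inv_r. reflexivity. Qed.

Lemma inv_dist_r (X : MetricSpace) (f : isometry X) a b :
  mdist a (iso_inv f b) = mdist (f a) b.
Proof. rewrite <- (iso_dist X f), iso_inv_r. reflexivity. Qed.

Fixpoint itr {X : Type} (g : X -> X) (n : nat) (x : X) : X :=
  match n with O => x | S n => g (itr g n x) end.

Lemma itr_S' {X : Type} (g : X -> X) n x : itr g (S n) x = itr g n (g x).
Proof. induction n; simpl; auto. simpl in IHn. rewrite IHn. reflexivity. Qed.

Lemma itr_dist (X : MetricSpace) (g : X -> X) (Hg : forall a b, mdist (g a) (g b) = mdist a b) n a b :
  mdist (itr g n a) (itr g n b) = mdist a b.
Proof. induction n; simpl; auto. rewrite Hg. auto. Qed.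

Lemma lower_disp (X : MetricSpace) (delta : R) (g : X -> X) :
  0 <= delta -> hyperbolic X delta ->
  (forall a b, mdist (g a) (g b) = mdist a b) ->
  forall x, mdist x (g (g x)) > mdist x (g x) + 2 * delta ->
  forall z, mdist (g z) z >= mdist x (g (g x)) - mdist x (g x) - 2 * delta.
Proof.
  intros Hd Hh Hg x Hc z.
  set (l := mdist x (g x)) in *. set (m2 := mdist x (g (g x))) in *.
  set (c := m2 - l - 2 * delta).
  set (f := fun k => mdist x (itr g k x)).
  assert (Hstep : forall k, f (S k) >= f k + c).
  { induction k.
    - unfold f; simpl. rewrite mrefl.
      pose proof (mtri X x (g x) (g (g x))). rewrite Hg in H.
      pose proof (msym X (g x) x). unfold c, m2, l in *. lra.
    - destruct (hypD X delta Hh (itr g k x) x (itr g (S (S k)) x) (itr g (S k) x)) as [H|H];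
      unfold gromov in H; unfold f in *.
      + assert (E1 : mdist (itr g k x) (itr g (S k) x) = l).
        { rewrite itr_S', itr_dist; auto. }
        assert (E2 : mdist (itr g k x) (itr g (S (S k)) x) = m2).
        { rewrite !itr_S', itr_dist; auto. }
        assert (E3 : mdist (itr g (S (S k)) x) (itr g (S k) x) = l).
        { rewrite (itr_S' g (S k)), itr_dist; auto. rewrite msym. auto. }
        pose proof (msym X x (itr g (S k) x)).
        pose proof (msym X x (itr g k x)).
        pose proof (msym X x (itr g (S (S k)) x)).
        unfold c in *. lra.
      + assert (E1 : mdist (itr g k x) (itr g (S k) x) = l).
        { rewrite itr_S', itr_dist; auto. }
        assert (E2 : mdist (itr g k x) (itr g (S (S k)) x) = m2).
        { rewrite !itr_S', itr_dist; auto. }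
        assert (E3 : mdist (itr g (S (S k)) x) (itr g (S k) x) = l).
        { rewrite (itr_S' g (S k)), itr_dist; auto. rewrite msym. auto. }
        pose proof (msym X x (itr g (S k) x)).
        pose proof (msym X x (itr g k x)).
        pose proof (msym X x (itr g (S (S k)) x)).
        unfold c in *. lra. }
  assert (Hlow : forall n, f n >= INR n * c).
  { induction n. unfold f; simpl. rewrite mrefl. lra.
    rewrite S_INR. specialize (Hstep n). lra. }
  assert (Hz : forall n, mdist z (itr g n z) <= INR n * mdist (g z) z).
  { induction n. simpl. rewrite mrefl. lra.
    rewrite S_INR. pose proof (mtri X z (itr g n z) (itr g (S n) z)).
    rewrite (itr_S' g n z) in H at 2. rewrite itr_dist in H; auto.
    rewrite (msym X z (g z)) in H. lra. }
  assert (Hup : forall n, f n <= 2 * mdist x z + INR n * mdist (g z) z).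
  { intro n. unfold f. pose proof (mtri X x z (itr g n x)).
    pose proof (mtri X z (itr g n z) (itr g n x)).
    rewrite itr_dist in H0; auto. rewrite (msym X z x) in H0.
    specialize (Hz n). lra. }
  destruct (Rle_or_lt c (mdist (g z) z)) as [H|H]. unfold c in *. lra.
  exfalso. destruct (ex_nat_gt (2 * mdist x z / (c - mdist (g z) z))) as [n Hn].
  specialize (Hlow n). specialize (Hup n).
  assert (Hp : 0 < c - mdist (g z) z) by lra.
  apply (Rmult_lt_compat_r (c - mdist (g z) z)) in Hn; auto.
  unfold Rdiv in Hn. rewrite Rmult_assoc, Rinv_l in Hn; lra.
Qed.

Lemma Cset_of_lb (X : MetricSpace) (delta : R) (g : X -> X) y :
  (forall z, mdist (g y) y - 8 * delta <= mdist (g z) z) -> C_set delta g y.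
Proof.
  intro H. unfold C_set, transl_len.
  destruct (Glb_Rbar_correct (fun r => exists x : X, r = mdist (g x) x)) as [_ Hg].
  assert (Hb : Rbar_le (Finite (mdist (g y) y - 8 * delta))
                 (Glb_Rbar (fun r => exists x : X, r = mdist (g x) x))).
  { apply Hg. intros r [z ->]. simpl. apply H. }
  destruct (Glb_Rbar _); simpl in *; lra || tauto.
Qed.

Lemma gromov_nonneg (X : MetricSpace) (p q x : X) : 0 <= gromov p q x.
Proof.
  unfold gromov. pose proof (mtri X p x q). pose proof (msym X x q). lra.
Qed.

Lemma near_C (X : MetricSpace) (delta : R) (g h : X -> X) :
  geodesic_space X -> 0 <= delta -> hyperbolic X delta ->
  (forall x, h (g x) = x) -> (forall x, g (h x) = x) ->
  (forall a b, mdist (g a) (g b) = mdist a b) ->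
  forall x, exists y, mdist x y <= gromov (h x) (g x) x /\ C_set delta g y.
Proof.
  intros Hgeo Hd Hh Hhg Hgh Hg x.
  set (l := mdist x (g x)). set (m2 := mdist x (g (g x))).
  assert (Hp : gromov (h x) (g x) x = l - m2 / 2).
  { unfold gromov.
    assert (E1 : mdist (h x) x = l).
    { rewrite <- Hg, Hgh. reflexivity. }
    assert (E2 : mdist (h x) (g x) = m2).
    { rewrite <- Hg, Hgh. reflexivity. }
    rewrite E1, E2, (msym X (g x) x). fold l. lra. }
  pose proof (gromov_nonneg X (h x) (g x) x) as Hp0.
  rewrite Hp in *. set (p := l - m2 / 2) in *.
  set (t := Rmin p (l / 2)).
  assert (Ht : t <= p /\ t <= l / 2 /\ 0 <= t).
  { assert (0 <= l) by apply mpos. unfold t, Rmin. destruct (Rle_dec p (l/2)); repeat split; lra. }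
  destruct (Hgeo x (g x)) as [gam [G0 [G1 G2]]]. fold l in G1, G2.
  set (y := gam t).
  assert (Hl : 0 <= l) by apply mpos.
  assert (Dxy : mdist x y = t).
  { unfold y. rewrite <- G0 at 1. rewrite G2; [|lra|lra].
    rewrite Rabs_left1; lra. }
  assert (Dyz : mdist y (g x) = l - t).
  { unfold y. rewrite <- G1 at 1. rewrite G2; [|lra|lra].
    rewrite Rabs_left1; lra. }
  assert (Pe : p = l - m2 / 2) by reflexivity.
  assert (Dy : mdist (g y) y <= l - 2 * t + 4 * delta).
  { destruct (hypD X delta Hh y x (g y) (g x)) as [H1|H1];
    destruct (hypD X delta Hh x (g (g x)) (g y) (g x)) as [H2|H2];
    unfold gromov in H1, H2;
    pose proof (Hg y x) as E1; pose proof (Hg (g x) y) as E2;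
    pose proof (Hg x (g x)) as E3;
    pose proof (msym X y x) as S1; pose proof (msym X (g x) x) as S2;
    pose proof (msym X (g y) (g x)) as S3; pose proof (msym X (g (g x)) (g x)) as S4;
    pose proof (msym X (g y) y) as S5; pose proof (msym X (g x) y) as S6;
    pose proof (msym X (g (g x)) (g y)) as S7;
    fold l m2 in H1, H2, E1, E2, E3, S1, S2, S3, S4, S5, S6, S7. all: lra. }
  exists y. split. lra.
  apply Cset_of_lb. intro z.
  destruct (Rlt_or_le (l + 2 * delta) m2) as [Hc|Hc].
  - pose proof (lower_disp X delta g Hd Hh Hg x Hc z). fold l m2 in H.
    assert (t = p). { unfold t, Rmin. destruct (Rle_dec p (l/2)); unfold p in *; lra. }
    lra.
  - pose proof (mpos X (g z) z).
    assert (mdist (g y) y <= 8 * delta).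
    { unfold t, Rmin in *. destruct (Rle_dec p (l/2)); unfold p in *; lra. }
    lra.
Qed.

Lemma L1 (X : MetricSpace) (delta : R) : hyperbolic X delta ->
  forall (o P a b : X) (ea eb : R),
  mdist o a + mdist a P - mdist o P <= 2 * ea ->
  mdist o b + mdist b P - mdist o P <= 2 * eb ->
  mdist o b <= mdist o a ->
  mdist a b <= mdist o a - mdist o b + 2 * ea + 2 * eb + 2 * delta.
Proof.
  intros Hh o P a b ea eb Ha Hb Hab.
  pose proof (mtri X o a P). pose proof (mtri X o b P).
  pose proof (msym X a o). pose proof (msym X P o). pose proof (msym X b o).
  pose proof (msym X P b).
  destruct (hypD X delta Hh a P b o) as [Q|Q]; unfold gromov in Q; lra.
Qed.

Lemma partA (X : MetricSpace) (delta : R) : hyperbolic X delta -> 0 <= delta ->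
  forall (o a1 a2 b1 b2 P e f : X) (L W1 W2 : R),
  mdist a1 b1 = L -> mdist a2 b2 = L -> mdist b1 P = W1 -> mdist b2 P = W2 ->
  mdist o a1 + L - mdist o b1 <= 2 * delta ->
  mdist o a2 + L - mdist o b2 <= 2 * delta ->
  L + W1 - mdist a1 P <= 2 * delta ->
  L + W2 - mdist a2 P <= 2 * delta ->
  L > 26 * delta -> mdist a1 a2 <= L -> mdist o a1 <= mdist o a2 ->
  mdist a2 e = mdist a1 a2 -> mdist e b2 = mdist a2 b1 ->
  mdist a1 f = mdist b1 a2 -> mdist f b1 = mdist b1 b2 ->
  mdist o a1 + mdist a2 a1 - mdist o a2 <= 10 * delta /\
  mdist a1 a2 + mdist b1 a2 - mdist a1 b1 <= 22 * delta /\
  mdist a2 b1 + mdist b2 b1 - mdist a2 b2 <= 28 * delta /\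
  2 * mdist a1 a2 - mdist a1 e <= 38 * delta /\
  2 * mdist b1 b2 - mdist b2 f <= 42 * delta.
Proof.
  intros Hh Hd o a1 a2 b1 b2 P e f L W1 W2 La1 La2 Lb1 Lb2 R1 R2 S1 S2 HL H12 HA
    Ee1 Ee2 Ef1 Ef2.
  pose proof (msym X o a1). pose proof (msym X o a2). pose proof (msym X o b1). pose proof (msym X o b2). pose proof (msym X o P). pose proof (msym X o e). pose proof (msym X o f). pose proof (msym X a1 a2). pose proof (msym X a1 b1). pose proof (msym X a1 b2). pose proof (msym X a1 P). pose proof (msym X a1 e). pose proof (msym X a1 f). pose proof (msym X a2 b1). pose proof (msym X a2 b2). pose proof (msym X a2 P). pose proof (msym X a2 e). pose proof (msym X a2 f). pose proof (msym X b1 b2). pose proof (msym X b1 P). pose proof (msym X b1 e). pose proof (msym X b1 f). pose proof (msym X b2 P). pose proof (msym X b2 e). pose proof (msym X b2 f). pose proof (msym X P e). pose proof (msym X P f). pose proof (msym X e f).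
  pose proof (mtri X o a1 b1). pose proof (mtri X o a2 b2).
  pose proof (mtri X o a1 a2).
  assert (F11 : mdist o a1 + mdist a1 P - mdist o P <= 2 * (2 * delta)).
  { pose proof (mtri X o a1 P).
    destruct (hypD X delta Hh o P b1 a1) as [Q|Q]; unfold gromov in Q; lra. }
  assert (F12 : mdist o a2 + mdist a2 P - mdist o P <= 2 * (2 * delta)).
  { pose proof (mtri X o a2 P).
    destruct (hypD X delta Hh o P b2 a2) as [Q|Q]; unfold gromov in Q; lra. }
  assert (F21 : mdist o b1 + mdist b1 P - mdist o P <= 2 * (2 * delta)).
  { pose proof (mtri X o b1 P).
    destruct (hypD X delta Hh a1 o P b1) as [Q|Q]; unfold gromov in Q; lra. }
  assert (F22 : mdist o b2 + mdist b2 P - mdist o P <= 2 * (2 * delta)).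
  { pose proof (mtri X o b2 P).
    destruct (hypD X delta Hh a2 o P b2) as [Q|Q]; unfold gromov in Q; lra. }
  pose proof (L1 X delta Hh o P a2 a1 _ _ F12 F11 HA) as D12.
  assert (C2 : mdist a1 a2 + mdist b1 a2 - mdist a1 b1 <= 22 * delta).
  { destruct (Rle_or_lt (mdist o a2) (mdist o b1)) as [Q|Q].
    - pose proof (L1 X delta Hh o P b1 a2 _ _ F21 F12 Q). lra.
    - pose proof (L1 X delta Hh o P a2 b1 _ _ F12 F21 (Rlt_le _ _ Q)). lra. }
  assert (C3 : mdist a2 b1 + mdist b2 b1 - mdist a2 b2 <= 28 * delta).
  { destruct (Rle_or_lt (mdist o a2) (mdist o b1)) as [Q|Q];
    [pose proof (L1 X delta Hh o P b1 a2 _ _ F21 F12 Q)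
    |pose proof (L1 X delta Hh o P a2 b1 _ _ F12 F21 (Rlt_le _ _ Q))];
    (destruct (Rle_or_lt (mdist o b1) (mdist o b2)) as [Q'|Q'];
    [pose proof (L1 X delta Hh o P b2 b1 _ _ F22 F21 Q')
    |pose proof (L1 X delta Hh o P b1 b2 _ _ F21 F22 (Rlt_le _ _ Q'))]); lra. }
  assert (Dp : mdist b1 b2 <= mdist o a2 - mdist o a1 + 12 * delta).
  { destruct (Rle_or_lt (mdist o b1) (mdist o b2)) as [Q'|Q'];
    [pose proof (L1 X delta Hh o P b2 b1 _ _ F22 F21 Q')
    |pose proof (L1 X delta Hh o P b1 b2 _ _ F21 F22 (Rlt_le _ _ Q'))]; lra. }
  pose proof (mtri X e b2 P). pose proof (mtri X o e P). pose proof (mtri X o a1 e).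
  pose proof (mtri X o a2 P). pose proof (mtri X o a1 f). pose proof (mtri X o f b2).
  repeat split; lra.
Qed.

Lemma nbhd_of (X : MetricSpace) (C : X -> Prop) (a : R) (x y : X) :
  C y -> mdist x y <= a -> nbhd C a x.
Proof.
  intros Cy Hy. unfold nbhd, dist_set.
  destruct (Glb_Rbar_correct (fun r => exists y : X, C y /\ r = mdist x y)) as [Hlb _].
  specialize (Hlb (mdist x y) (ex_intro _ y (conj Cy eq_refl))).
  destruct (Glb_Rbar _); simpl in *; lra || tauto.
Qed.

Theorem proposition2p31 (X : MetricSpace) (delta : R) (x0 : X)
  (u1 u2 v w1 w2 : isometry X) :
  geodesic_space X -> 0 <= delta -> hyperbolic X delta ->
  (forall x, u1 (v (w1 x)) = u2 (v (w2 x))) ->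
  reduced delta x0 u1 v -> reduced delta x0 u2 v ->
  reduced delta x0 v w1 -> reduced delta x0 v w2 ->
  mdist (v x0) x0 > 26 * delta ->
  mdist (u1 x0) (u2 x0) <= mdist (v x0) x0 ->
  mdist (u1 x0) x0 <= mdist (u2 x0) x0 ->
  let g := fun x => iso_inv u1 (u2 x) in
  (nbhd (C_set delta g) (190 * delta) x0 /\
   nbhd (C_set delta g) (190 * delta) (v x0)) /\
  gromov x0 (u2 x0) (u1 x0) <= 24 * delta /\
  gromov (u1 x0) (u1 (v x0)) (u2 x0) <= 66 * delta /\
  gromov (u2 x0) (u2 (v x0)) (u1 (v x0)) <= 138 * delta.
Proof.
  intros Hgeo Hd Hh Hcomp Hr1 Hr2 Hr3 Hr4 HL H12 HA g.
  set (h := fun x => iso_inv u2 (u1 x)).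
  assert (Hhg : forall x, h (g x) = x).
  { intro x. unfold h, g. rewrite iso_inv_r, iso_inv_l. reflexivity. }
  assert (Hgh : forall x, g (h x) = x).
  { intro x. unfold h, g. rewrite iso_inv_r, iso_inv_l. reflexivity. }
  assert (Hg : forall a b, mdist (g a) (g b) = mdist a b).
  { intros a b. unfold g. rewrite inv_dist_l, iso_inv_r, iso_dist. reflexivity. }
  set (L := mdist (v x0) x0).
  set (W1 := mdist x0 (w1 x0)). set (W2 := mdist x0 (w2 x0)).
  set (P := u1 (v (w1 x0))).
  assert (HP : P = u2 (v (w2 x0))) by apply Hcomp.
  set (e := u2 (iso_inv u1 (u2 x0))).
  set (f := u1 (iso_inv u2 (u1 (v x0)))).
  assert (La1 : mdist (u1 x0) (u1 (v x0)) = L).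
  { rewrite iso_dist. apply msym. }
  assert (La2 : mdist (u2 x0) (u2 (v x0)) = L).
  { rewrite iso_dist. apply msym. }
  assert (Lb1 : mdist (u1 (v x0)) P = W1).
  { unfold P. rewrite !iso_dist. reflexivity. }
  assert (Lb2 : mdist (u2 (v x0)) P = W2).
  { rewrite HP. rewrite !iso_dist. reflexivity. }
  assert (R1 : mdist x0 (u1 x0) + L - mdist x0 (u1 (v x0)) <= 2 * delta).
  { unfold reduced, gromov in Hr1. rewrite !inv_dist_l in Hr1. fold L in Hr1. lra. }
  assert (R2 : mdist x0 (u2 x0) + L - mdist x0 (u2 (v x0)) <= 2 * delta).
  { unfold reduced, gromov in Hr2. rewrite !inv_dist_l in Hr2. fold L in Hr2. lra. }
  assert (S1 : L + W1 - mdist (u1 x0) P <= 2 * delta).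
  { unfold reduced, gromov in Hr3. rewrite !inv_dist_l in Hr3.
    unfold P. rewrite !iso_dist. rewrite (msym X x0 (v x0)) in Hr3.
    rewrite (msym X (w1 x0) x0) in Hr3. fold L W1 in Hr3. lra. }
  assert (S2 : L + W2 - mdist (u2 x0) P <= 2 * delta).
  { unfold reduced, gromov in Hr4. rewrite !inv_dist_l in Hr4.
    rewrite HP, !iso_dist. rewrite (msym X x0 (v x0)) in Hr4.
    rewrite (msym X (w2 x0) x0) in Hr4. fold L W2 in Hr4. lra. }
  assert (HA' : mdist x0 (u1 x0) <= mdist x0 (u2 x0)).
  { rewrite (msym X x0 (u1 x0)), (msym X x0 (u2 x0)). exact HA. }
  assert (Ee1 : mdist (u2 x0) e = mdist (u1 x0) (u2 x0)).
  { unfold e. rewrite iso_dist, inv_dist_r. reflexivity. }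
  assert (Ee2 : mdist e (u2 (v x0)) = mdist (u2 x0) (u1 (v x0))).
  { unfold e. rewrite iso_dist, inv_dist_l. reflexivity. }
  assert (Ef1 : mdist (u1 x0) f = mdist (u1 (v x0)) (u2 x0)).
  { unfold f. rewrite iso_dist, inv_dist_r. apply msym. }
  assert (Ef2 : mdist f (u1 (v x0)) = mdist (u1 (v x0)) (u2 (v x0))).
  { unfold f. rewrite iso_dist, inv_dist_l. reflexivity. }
  destruct (partA X delta Hh Hd x0 (u1 x0) (u2 x0) (u1 (v x0)) (u2 (v x0)) P e f L W1 W2
     La1 La2 Lb1 Lb2 R1 R2 S1 S2 HL H12 HA' Ee1 Ee2 Ef1 Ef2) as [C1 [C2 [C3 [C4 C5]]]].
  assert (Px0 : gromov (h x0) (g x0) x0 <= 19 * delta).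
  { unfold gromov, h, g.
    rewrite (inv_dist_l X u2 (u1 x0) x0), (inv_dist_l X u1 (u2 x0) x0).
    rewrite (inv_dist_l X u2 (u1 x0) (iso_inv u1 (u2 x0))). fold e.
    pose proof (msym X (u2 x0) (u1 x0)). lra. }
  assert (Pvx0 : gromov (h (v x0)) (g (v x0)) (v x0) <= 21 * delta).
  { unfold gromov, h, g.
    rewrite (inv_dist_l X u2 (u1 (v x0)) (v x0)), (inv_dist_l X u1 (u2 (v x0)) (v x0)).
    rewrite (inv_dist_r X u1 (iso_inv u2 (u1 (v x0))) (u2 (v x0))). fold f.
    pose proof (msym X (u2 (v x0)) (u1 (v x0))).
    pose proof (msym X f (u2 (v x0))). lra. }
  destruct (near_C X delta g h Hgeo Hd Hh Hhg Hgh Hg x0) as [y [Hy Cy]].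
  destruct (near_C X delta g h Hgeo Hd Hh Hhg Hgh Hg (v x0)) as [y' [Hy' Cy']].
  split; [split|].
  - apply (nbhd_of X _ _ x0 y Cy). lra.
  - apply (nbhd_of X _ _ (v x0) y' Cy'). lra.
  - unfold gromov.
    pose proof (msym X x0 (u1 x0)). pose proof (msym X x0 (u2 x0)).
    pose proof (msym X (u1 x0) (u2 x0)). pose proof (msym X (u1 (v x0)) (u2 x0)).
    pose proof (msym X (u2 (v x0)) (u1 (v x0))). pose proof (msym X (u2 x0) (u1 (v x0))).
    repeat split; lra.
Qed.
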